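(* Let $\sigma$ be a finite sequence of transitions. If $\sigma$ satisfies at least one of the conditions (C1), (C2), (C3) below, then $\sigma$ is not $\omega$-iterable. (C1) For some clock $y\in X(\sigma)\setminus X_0$, $\sigma$ contains atomic guards $y\preccurlyeq d$ and $y\succcurlyeq c$ with $d<c$, or with $d=c$ and $\preccurlyeq$ being $<$, or with $d=c$ and $\succcurlyeq$ being $>$. (C2) There are clocks $x\in X_0$ and $y\in X(\sigma)\setminus X_0$ such that $\sigma$ contains atomic guards $y\preccurlyeq d$ and $x\succcurlyeq c$ with $c>0$. (C3) For some clock $x\in X_0$ the atomic guard $x>0$ occurs in $\sigma$, and for some clock $y\in X(\sigma)\setminus X_0$ both $y\le c$ and $y\ge c$ occur in $\sigma$ (for the same $c$).
   Context: Fix a finite set of clocks $X=\{x_0,x_1,\dots,x_m\}$, where $x_0$ is a special reference clock. A valuation is a map $v:X\to\mathbb{R}_{\ge 0}$ with $v(x_0)=0$. For $\delta\ge 0$, $v+\delta$ is the valuation adding $\delta$ to every clock other than $x_0$; for $R\subseteq X\setminus\{x_0\}$, $[R]v$ sets the clocks of $R$ to $0$ and leaves the others unchanged. A guard is a conjunction of atomic constraints $x\sim c$ with $x\in X\setminus\{x_0\}$, $\sim\in\{<,\le,=,\ge,>\}$, $c\in\mathbb{N}$. A transition $t$ is a pair $(g,R)$ of a guard $g$ and a reset set $R\subseteq X\setminus\{x_0\}$ (control states are omitted). We write $v\xrightarrow{t}^{\delta}v'$ if $v+\delta\models g$ and $v'=[R](v+\delta)$. An execution of a sequence $\sigma=t_1\cdots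 t_k$ is a sequence of valuations $v_0,\dots,v_k$ such that there are $\delta_1,\dots,\delta_k\ge 0$ with $v_{i-1}\xrightarrow{t_i}^{\delta_i}v_i$ for all $i$; we then write $v_0\xrightarrow{\sigma}^{\delta}v_k$ with $\delta=\sum_i\delta_i$, and say $\sigma$ is executable from $v_0$. The sequence $\sigma$ is $\omega$-iterable (from $v_0$) if there are infinite sequences of valuations $v_0,v_1,\dots$ and delays $\delta_1,\delta_2,\dots$ with $v_0\xrightarrow{\sigma}^{\delta_1}v_1\xrightarrow{\sigma}^{\delta_2}v_2\cdots$. For a sequence $\sigma$, $X(\sigma)$ is the set of clocks appearing in $\sigma$ (in guards or resets), and $X_0\subseteq X(\sigma)$ is the set of clocks reset on some transition of $\sigma$. The symbol $\preccurlyeq$ stands for $<$ or $\le$, and $\succcurlyeq$ stands for $>$ or $\ge$; an atomic guard $x=c$ counts both as $x\le c$ and as $x\ge c$. *)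

(* Defs.v *)
From Stdlib Require Import Reals List Arith.
Import ListNotations.
Open Scope R_scope.

(* Clocks are natural numbers; with parameter m the clock set is
   X = {0,1,...,m}, clock 0 being the reference clock x_0. *)
Definition clock := nat.

Inductive cmp := CLt | CLe | CEq | CGe | CGt.

Record atom := mkAtom { aclk : clock; acmp : cmp; acst : nat }.

Record trans := mkTrans { guard : list atom; resets : list clock }.

Definition valuation := clock -> R.

Definition is_valuation (m : nat) (v : valuation) : Prop :=
  v 0%nat = 0 /\ forall x : clock, (1 <= x <= m)%nat -> 0 <= v x.

Definition wf_trans (m : nat) (t : trans) : Prop :=
  (forall a, In a (guard t) -> (1 <= aclk a <= m)%nat) /\
  (forall x, In x (resets t) -> (1 <= x <= m)%nat).

Definition delay (v : valuation) (d : R) : valuation :=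
  fun x => if Nat.eqb x 0 then v x else v x + d.

Definition reset (Rs : list clock) (v : valuation) : valuation :=
  fun x => if existsb (Nat.eqb x) Rs then 0 else v x.

Definition sat_atom (v : valuation) (a : atom) : Prop :=
  let x := v (aclk a) in
  let c := INR (acst a) in
  match acmp a with
  | CLt => x < c | CLe => x <= c | CEq => x = c | CGe => x >= c | CGt => x > c
  end.

Definition sat_guard (v : valuation) (g : list atom) : Prop :=
  forall a, In a g -> sat_atom v a.

Definition step (t : trans) (d : R) (v v' : valuation) : Prop :=
  sat_guard (delay v d) (guard t) /\ v' = reset (resets t) (delay v d).

Inductive exec : list trans -> valuation -> valuation -> Prop :=
  | exec_nil : forall v, exec [] v v
  | exec_cons : forall t s v v' v'' d,
      0 <= d -> step t d v v' -> exec s v' v'' -> exec (t :: s) v v''.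

Definition omega_iterable (sigma : list trans) (v0 : valuation) : Prop :=
  exists vs : nat -> valuation, vs 0%nat = v0 /\
    forall i : nat, exec sigma (vs i) (vs (S i)).

Definition occurs (a : atom) (sigma : list trans) : Prop :=
  exists t, In t sigma /\ In a (guard t).

Definition in_Xs (x : clock) (sigma : list trans) : Prop :=
  exists t, In t sigma /\ ((exists a, In a (guard t) /\ aclk a = x) \/ In x (resets t)).

Definition in_X0 (x : clock) (sigma : list trans) : Prop :=
  exists t, In t sigma /\ In x (resets t).

(* "upper" atoms  x ≼ c  (x = c counts) and "lower" atoms  x ≽ c *)
Definition is_upper (k : cmp) : Prop := k = CLt \/ k = CLe \/ k = CEq.
Definition is_lower (k : cmp) : Prop := k = CGt \/ k = CGe \/ k = CEq.

Definition cond_C1 (sigma : list trans) : Prop :=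
  exists y, in_Xs y sigma /\ ~ in_X0 y sigma /\
    exists k1 d k2 c,
      occurs (mkAtom y k1 d) sigma /\ is_upper k1 /\
      occurs (mkAtom y k2 c) sigma /\ is_lower k2 /\
      ((d < c)%nat \/ (d = c /\ (k1 = CLt \/ k2 = CGt))).

Definition cond_C2 (sigma : list trans) : Prop :=
  exists x y, in_X0 x sigma /\ in_Xs y sigma /\ ~ in_X0 y sigma /\
    exists k1 d k2 c,
      occurs (mkAtom y k1 d) sigma /\ is_upper k1 /\
      occurs (mkAtom x k2 c) sigma /\ is_lower k2 /\ (0 < c)%nat.

Definition cond_C3 (sigma : list trans) : Prop :=
  (exists x, in_X0 x sigma /\ occurs (mkAtom x CGt 0) sigma) /\
  (exists y c, in_Xs y sigma /\ ~ in_X0 y sigma /\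
     (occurs (mkAtom y CLe c) sigma \/ occurs (mkAtom y CEq c) sigma) /\
     (occurs (mkAtom y CGe c) sigma \/ occurs (mkAtom y CEq c) sigma)).

(* Main.v *)
Require Import Defs.
From Stdlib Require Import Reals List Arith Lra Lia.
Import ListNotations.
Open Scope R_scope.

Lemma reset_notin R0 u z : ~ In z R0 -> reset R0 u z = u z.
Proof.
  intros H; unfold reset.
  destruct (existsb (Nat.eqb z) R0) eqn:E; auto.
  apply existsb_exists in E as [w [Hw Hz]]. apply Nat.eqb_eq in Hz; subst.
  contradiction.
Qed.

Lemma reset_in R0 u z : In z R0 -> reset R0 u z = 0.
Proof.
  intros H; unfold reset.
  destruct (existsb (Nat.eqb z) R0) eqn:E; auto.
  assert (existsb (Nat.eqb z) R0 = true).
  { apply existsb_exists. exists z. split; auto. apply Nat.eqb_refl. }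
  congruence.
Qed.

Lemma reset_le R0 u z : 0 <= u z -> reset R0 u z <= u z /\ 0 <= reset R0 u z.
Proof.
  intros H; unfold reset. destruct existsb; lra.
Qed.

Lemma delay_nz v d z : z <> 0%nat -> delay v d z = v z + d.
Proof.
  intros H; unfold delay. destruct (Nat.eqb_spec z 0); [contradiction|auto].
Qed.

Lemma mono s v v' x y : exec s v v' ->
  (forall t, In t s -> ~ In y (resets t)) -> y <> 0%nat -> x <> 0%nat -> 0 <= v x ->
  v y <= v' y /\ v y - v x <= v' y - v' x /\ 0 <= v' x.
Proof.
  induction 1; intros Hy Hy0 Hx0 Hvx.
  - lra.
  - destruct H0 as [_ ->].
    assert (Hr : reset (resets t) (delay v d) y = v y + d).
    { rewrite reset_notin by (apply Hy; left; auto). apply delay_nz; auto. }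
    pose proof (reset_le (resets t) (delay v d) x) as Hl.
    rewrite delay_nz in Hl by auto.
    destruct Hl as [Hl1 Hl2]; [lra|].
    destruct IHexec as [I1 [I2 I3]]; auto.
    { intros; apply Hy; right; auto. }
    rewrite Hr in I1, I2. lra.
Qed.

Lemma mono1 s v v' y : exec s v v' ->
  (forall t, In t s -> ~ In y (resets t)) -> y <> 0%nat -> v y <= v' y.
Proof.
  induction 1; intros Hy Hy0.
  - lra.
  - destruct H0 as [_ ->].
    assert (Hr : reset (resets t) (delay v d) y = v y + d).
    { rewrite reset_notin by (apply Hy; left; auto). apply delay_nz; auto. }
    assert (I := IHexec ltac:(intros; apply Hy; right; auto) Hy0).
    rewrite Hr in I. lra.
Qed.

Lemma nonneg s v v' x : exec s v v' -> x <> 0%nat -> 0 <= v x -> 0 <= v' x.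
Proof.
  induction 1; intros Hx0 Hvx; auto.
  destruct H0 as [_ ->]. apply IHexec; auto.
  pose proof (reset_le (resets t) (delay v d) x) as Hl.
  rewrite delay_nz in Hl by auto. destruct Hl; lra.
Qed.

Lemma check1 s v v' y t a : exec s v v' ->
  (forall t, In t s -> ~ In y (resets t)) -> y <> 0%nat ->
  In t s -> In a (guard t) ->
  exists w, sat_atom w a /\ v y <= w y <= v' y.
Proof.
  intros He; revert t a; induction He; intros t0 a Hy Hy0 Ht Ha.
  - destruct Ht.
  - destruct Ht as [<- | Ht].
    + destruct H0 as [Hg ->]. exists (delay v d). split; [apply Hg; auto|].
      rewrite delay_nz by auto.
      assert (I := mono1 _ _ _ _ He ltac:(intros; apply Hy; right; auto) Hy0).
      rewrite reset_notin in I by (apply Hy; left; auto).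
      rewrite delay_nz in I by auto. lra.
    + destruct (IHHe t0 a) as [w [W1 W2]]; auto.
      { intros; apply Hy; right; auto. }
      exists w; split; auto.
      destruct H0 as [_ ->].
      rewrite reset_notin in W2 by (apply Hy; left; auto).
      rewrite delay_nz in W2 by auto. lra.
Qed.

Lemma check2 s v v' x y t a : exec s v v' ->
  (forall t, In t s -> ~ In y (resets t)) -> y <> 0%nat -> x <> 0%nat -> 0 <= v x ->
  In t s -> In a (guard t) ->
  exists w, sat_atom w a /\ w y <= v' y /\ v y - v x <= w y - w x.
Proof.
  intros He; revert t a; induction He; intros t0 a Hy Hy0 Hx0 Hvx Ht Ha.
  - destruct Ht.
  - destruct H0 as [Hg Hv']. subst v'.
    pose proof (reset_le (resets t) (delay v d) x) as Hl.
    rewrite delay_nz in Hl by auto. destruct Hl as [Hl1 Hl2]; [lra|].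
    assert (Hr : reset (resets t) (delay v d) y = v y + d).
    { rewrite reset_notin by (apply Hy; left; auto). apply delay_nz; auto. }
    destruct Ht as [<- | Ht].
    + exists (delay v d). split; [apply Hg; auto|].
      rewrite !delay_nz by auto.
      destruct (mono _ _ _ x y He ltac:(intros; apply Hy; right; auto) Hy0 Hx0 Hl2)
        as [I1 [I2 I3]].
      rewrite Hr in I1. lra.
    + destruct (IHHe t0 a) as [w [W1 [W2 W3]]]; auto.
      { intros; apply Hy; right; auto. }
      exists w; split; auto. split; auto.
      rewrite Hr in W3. lra.
Qed.

Lemma resetL s v v' x y t : exec s v v' ->
  (forall t, In t s -> ~ In y (resets t)) -> y <> 0%nat -> x <> 0%nat -> 0 <= v x ->
  In t s -> In x (resets t) -> v y <= v' y - v' x.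
Proof.
  intros He; revert t; induction He; intros t0 Hy Hy0 Hx0 Hvx Ht Hxr.
  - destruct Ht.
  - destruct H0 as [Hg Hv']. subst v'.
    pose proof (reset_le (resets t) (delay v d) x) as Hl.
    rewrite delay_nz in Hl by auto. destruct Hl as [Hl1 Hl2]; [lra|].
    assert (Hr : reset (resets t) (delay v d) y = v y + d).
    { rewrite reset_notin by (apply Hy; left; auto). apply delay_nz; auto. }
    destruct Ht as [<- | Ht].
    + destruct (mono _ _ _ x y He ltac:(intros; apply Hy; right; auto) Hy0 Hx0 Hl2)
        as [I1 [I2 I3]].
      rewrite Hr, reset_in in I2 by auto. lra.
    + assert (I := IHHe t0 ltac:(intros; apply Hy; right; auto) Hy0 Hx0 Hl2 Ht Hxr).
      rewrite Hr in I. lra.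
Qed.

Lemma upper_sat w z k c : is_upper k -> sat_atom w (mkAtom z k c) -> w z <= INR c.
Proof. unfold sat_atom; simpl. intros [->|[->| ->]]; lra. Qed.
Lemma lower_sat w z k c : is_lower k -> sat_atom w (mkAtom z k c) -> w z >= INR c.
Proof. unfold sat_atom; simpl. intros [->|[->| ->]]; lra. Qed.

Theorem lemma2 (m : nat) (sigma : list trans) (v0 : valuation) :
  (forall t, In t sigma -> wf_trans m t) ->
  is_valuation m v0 ->
  (cond_C1 sigma \/ cond_C2 sigma \/ cond_C3 sigma) ->
  ~ omega_iterable sigma v0.
Proof.
  intros Hwf [Hv00 Hv0] HC [vs [Hvs0 Hex]].
  assert (Ynz : forall y, in_Xs y sigma -> ~ in_X0 y sigma ->
     (y <> 0%nat) /\ (forall t, In t sigma -> ~ In y (resets t))).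
  { intros y [t [Ht [[a [Ha Hay]] | Hr]]] Hn.
    - split.
      + destruct (Hwf t Ht) as [G _]. specialize (G a Ha). lia.
      + intros t' Ht' Hr'. apply Hn. exists t'; auto.
    - exfalso; apply Hn; exists t; auto. }
  assert (Xnz : forall x, in_X0 x sigma -> (x <> 0%nat) /\ forall i, 0 <= vs i x).
  { intros x [t [Ht Hr]].
    destruct (Hwf t Ht) as [_ G]. specialize (G x Hr).
    split; [lia|].
    induction i.
    - rewrite Hvs0. apply Hv0; lia.
    - apply (nonneg _ _ _ x (Hex i)); auto; lia. }
  destruct HC as [C1 | [C2 | C3]].
  - destruct C1 as [y [Hy1 [Hy2 [k1 [d [k2 [c [[t1 [Ht1 Ha1]] [Hu [[t2 [Ht2 Ha2]] [Hl Hdc]]]]]]]]]]].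
    destruct (Ynz y Hy1 Hy2) as [Yn Yr].
    destruct (check1 _ _ _ y t2 _ (Hex 0%nat) Yr Yn Ht2 Ha2) as [w [W1 W2]].
    destruct (check1 _ _ _ y t1 _ (Hex 1%nat) Yr Yn Ht1 Ha1) as [w' [W1' W2']].
    pose proof (lower_sat _ _ _ _ Hl W1). pose proof (upper_sat _ _ _ _ Hu W1').
    destruct Hdc as [Hdc | [<- [-> | ->]]].
    + apply lt_INR in Hdc. lra.
    + unfold sat_atom in W1'; simpl in W1'. lra.
    + unfold sat_atom in W1; simpl in W1. lra.
  - destruct C2 as [x [y [Hx [Hy1 [Hy2 [k1 [d [k2 [c [[t1 [Ht1 Ha1]] [Hu [[t2 [Ht2 Ha2]] [Hl Hc]]]]]]]]]]]]].
    destruct (Ynz y Hy1 Hy2) as [Yn Yr].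
    destruct (Xnz x Hx) as [Xn Xp].
    destruct Hx as [t0 [Ht0 Hr0]].
    assert (B : forall i, vs i y <= INR d).
    { intros i. destruct (check1 _ _ _ y t1 _ (Hex i) Yr Yn Ht1 Ha1) as [w [W1 W2]].
      pose proof (upper_sat _ _ _ _ Hu W1). lra. }
    assert (Hc1 : 1 <= INR c) by (apply (le_INR 1); lia).
    assert (Cst : forall i, vs i y + 1 <= vs (S (S i)) y).
    { intros i.
      pose proof (resetL _ _ _ x y t0 (Hex i) Yr Yn Xn (Xp i) Ht0 Hr0).
      destruct (check2 _ _ _ x y t2 _ (Hex (S i)) Yr Yn Xn (Xp (S i)) Ht2 Ha2)
        as [w [W1 [W2 W3]]].
      pose proof (lower_sat _ _ _ _ Hl W1). lra. }
    assert (G : forall k, vs 0%nat y + INR k <= vs (2 * k)%nat y).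
    { induction k. simpl. lra.
      replace (2 * S k)%nat with (S (S (2 * k))) by lia.
      rewrite S_INR. pose proof (Cst (2 * k)%nat). lra. }
    destruct (INR_unbounded (INR d - vs 0%nat y)) as [k Hk].
    pose proof (G k). pose proof (B (2 * k)%nat). lra.
  - destruct C3 as [[x [Hx [t2 [Ht2 Ha2]]]] [y [c [Hy1 [Hy2 [Hu Hl]]]]]].
    destruct (Ynz y Hy1 Hy2) as [Yn Yr].
    destruct (Xnz x Hx) as [Xn Xp].
    destruct Hx as [t0 [Ht0 Hr0]].
    assert (U : exists k, is_upper k /\ occurs (mkAtom y k c) sigma).
    { destruct Hu; eexists; split; eauto; unfold is_upper; auto. }
    assert (L : exists k, is_lower k /\ occurs (mkAtom y k c) sigma).
    { destruct Hl; eexists; split; eauto; unfold is_lower; auto. }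
    destruct U as [ku [Hku [tu [Htu Hau]]]].
    destruct L as [kl [Hkl [tl [Htl Hal]]]].
    destruct (check1 _ _ _ y tl _ (Hex 0%nat) Yr Yn Htl Hal) as [w [W1 W2]].
    destruct (check1 _ _ _ y tu _ (Hex 3%nat) Yr Yn Htu Hau) as [w' [W1' W2']].
    pose proof (lower_sat _ _ _ _ Hkl W1). pose proof (upper_sat _ _ _ _ Hku W1').
    pose proof (resetL _ _ _ x y t0 (Hex 1%nat) Yr Yn Xn (Xp 1%nat) Ht0 Hr0).
    destruct (check2 _ _ _ x y t2 _ (Hex 2%nat) Yr Yn Xn (Xp 2%nat) Ht2 Ha2)
      as [w2 [V1 [V2 V3]]].
    unfold sat_atom in V1; simpl in V1. lra.
Qed.
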